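(* For $n\ge2$ and $c\ge1$, the abelianization of $UW_n(c)$ is isomorphic to $\mathbb{Z}^c\oplus\mathbb{Z}_2$.
   Context: $UV_n(c)$ ($n\ge2$, $c\ge1$) is the group with generators $\rho_i$ ($1\le i\le n-1$), $\sigma_{i,t}$ ($1\le i\le n-1$, $1\le t\le c$) and relations $\rho_i\rho_{i+1}\rho_i=\rho_{i+1}\rho_i\rho_{i+1}$ ($1\le i\le n-2$), $\rho_i\rho_j=\rho_j\rho_i$ ($|i-j|\ge2$), $\rho_i^2=1$, $\sigma_{i,t}\sigma_{j,\ell}=\sigma_{j,\ell}\sigma_{i,t}$ ($|i-j|\ge2$, $1\le t,\ell\le c$), $\sigma_{i,t}\rho_j=\rho_j\sigma_{i,t}$ ($|i-j|\ge2$), $\rho_i\rho_{i+1}\sigma_{i,t}=\sigma_{i+1,t}\rho_i\rho_{i+1}$ ($1\le i\le n-2$, $1\le t\le c$). The universal welded braid group $UW_n(c)$ is the quotient of $UV_n(c)$ by the additional (welded) relations $\rho_i\sigma_{i+1,t}\sigma_{i,t}=\sigma_{i+1,t}\sigma_{i,t}\rho_{i+1}$ for all $1\le i\le n-2$, $1\le t\le c$. *)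

(* Defs.v *)
From mathcomp Require Import all_boot all_order all_algebra.
Set Implicit Arguments. Unset Strict Implicit. Unset Printing Implicit Defensive.
Import GRing.Theory.

(* Generators of UV_n(c), 0-based: Rho i (i : 'I_(n-1)) is rho_{i+1},
   Sig i t is sigma_{i+1, t+1}. *)
Inductive UVgen (n c : nat) : Type :=
| Rho of 'I_n.-1
| Sig of 'I_n.-1 & 'I_c.

(* A letter is a generator together with an exponent sign
   (false = g, true = g^-1); words are elements of the free monoid
   on letters; the free group is its quotient by free reduction. *)
Definition letter n c := (UVgen n c * bool)%type.
Definition word n c := seq (letter n c).

Definition pos n c (g : UVgen n c) : letter n c := (g, false).
Definition inv_letter n c (x : letter n c) : letter n c := (x.1, ~~ x.2).

Definition far (i j : nat) : bool := (i.+2 <= j) || (j.+2 <= i).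

Inductive UWrel (n c : nat) : word n c -> word n c -> Prop :=
| R_braid (i j : 'I_n.-1) : val j = (val i).+1 ->
    UWrel [:: pos (Rho c i); pos (Rho c j); pos (Rho c i)]
          [:: pos (Rho c j); pos (Rho c i); pos (Rho c j)]
| R_rhocomm (i j : 'I_n.-1) : far i j ->
    UWrel [:: pos (Rho c i); pos (Rho c j)] [:: pos (Rho c j); pos (Rho c i)]
| R_rhosq (i : 'I_n.-1) :
    UWrel [:: pos (Rho c i); pos (Rho c i)] [::]
| R_sigcomm (i j : 'I_n.-1) (t l : 'I_c) : far i j ->
    UWrel [:: pos (Sig i t); pos (Sig j l)] [:: pos (Sig j l); pos (Sig i t)]
| R_sigrho (i j : 'I_n.-1) (t : 'I_c) : far i j ->
    UWrel [:: pos (Sig i t); pos (Rho c j)] [:: pos (Rho c j); pos (Sig i t)]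
| R_mixed (i j : 'I_n.-1) (t : 'I_c) : val j = (val i).+1 ->
    UWrel [:: pos (Rho c i); pos (Rho c j); pos (Sig i t)]
          [:: pos (Sig j t); pos (Rho c i); pos (Rho c j)]
| R_welded (i j : 'I_n.-1) (t : 'I_c) : val j = (val i).+1 ->
    UWrel [:: pos (Rho c i); pos (Sig j t); pos (Sig i t)]
          [:: pos (Sig j t); pos (Sig i t); pos (Rho c j)].

(* Equality in the abelianization UW_n(c)/[UW_n(c),UW_n(c)]: the smallest
   congruence on words containing free reduction, the defining relations,
   and u v = v u for all words u v (i.e. killing all commutators). *)
Inductive UWab_eq (n c : nat) : word n c -> word n c -> Prop :=
| Ab_refl w : UWab_eq w w
| Ab_sym w1 w2 : UWab_eq w1 w2 -> UWab_eq w2 w1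
| Ab_trans w1 w2 w3 : UWab_eq w1 w2 -> UWab_eq w2 w3 -> UWab_eq w1 w3
| Ab_ctx u v w1 w2 : UWab_eq w1 w2 -> UWab_eq (u ++ w1 ++ v) (u ++ w2 ++ v)
| Ab_free (x : letter n c) : UWab_eq [:: x; inv_letter x] [::]
| Ab_rel l r : UWrel l r -> UWab_eq l r
| Ab_comm u v : UWab_eq (u ++ v) (v ++ u).

(* Main.v *)
Require Import Defs.
From mathcomp Require Import all_boot all_order all_algebra.
From mathcomp Require Import zify.
Import GRing.Theory Num.Theory.
Local Open Scope ring_scope.

Lemma z2_11 : (1 + 1 : 'Z_2) = 0. Proof. by apply/val_inj. Qed.
Lemma z2_N1 : (- 1 : 'Z_2) = 1. Proof. by apply/val_inj. Qed.

Definition winv {n c} (w : word n c) : word n c := rev (map (@inv_letter n c) w).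

Lemma cat_congr {n c} {a b a' b' : word n c} :
  UWab_eq a a' -> UWab_eq b b' -> UWab_eq (a ++ b) (a' ++ b').
Proof.
move=> h1 h2; apply: (Ab_trans (w2 := a' ++ b)).
  by have := Ab_ctx [::] b h1.
by have := Ab_ctx a' [::] h2; rewrite !cats0.
Qed.

Lemma winv_r {n c} (w : word n c) : UWab_eq (w ++ winv w) [::].
Proof.
elim: w => [|x w IH] /=; first exact: Ab_refl.
rewrite /winv /= rev_cons -cats1 catA.
apply: (Ab_trans (w2 := [:: x] ++ [::] ++ [:: inv_letter x])).
  exact: (Ab_ctx [:: x] [:: inv_letter x] IH).
exact: Ab_free.
Qed.

Lemma winv_l {n c} (w : word n c) : UWab_eq (winv w ++ w) [::].
Proof. exact: Ab_trans (Ab_comm _ _) (winv_r w). Qed.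

Lemma cancel_r {n c} {a b d : word n c} :
  UWab_eq (a ++ d) (b ++ d) -> UWab_eq a b.
Proof.
move=> h.
have e : forall x : word n c, UWab_eq ((x ++ d) ++ winv d) x.
  move=> x; rewrite -catA.
  have := cat_congr (Ab_refl x) (winv_r d); rewrite cats0; exact.
apply: Ab_trans (Ab_sym (e a)) _.
apply: Ab_trans (e b).
exact: cat_congr h (Ab_refl _).
Qed.

Lemma ker_winv {n c} {w1 w2 : word n c} :
  UWab_eq (w1 ++ winv w2) [::] -> UWab_eq w1 w2.
Proof.
move=> h; apply: (cancel_r (d := winv w2)).
apply: Ab_trans h (Ab_sym (winv_r w2)).
Qed.

Lemma inv_congr {n c} (x y : letter n c) :
  UWab_eq [:: x] [:: y] -> UWab_eq [:: inv_letter x] [:: inv_letter y].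
Proof.
case: x => g b; case: y => g' b' h.
apply: ker_winv; rewrite /winv /= /inv_letter /= negbK /rev /=.
apply: (Ab_trans (w2 := [:: (g, ~~ b)] ++ [:: (g, b)])).
  exact: (@cat_congr _ _ [:: (g, ~~ b)] [:: (g', b')] _ _ (Ab_refl _) (Ab_sym h)).
by have := Ab_free (g, ~~ b); rewrite /inv_letter /= negbK.
Qed.

Lemma chain m (R : 'I_m -> 'I_m -> Prop) :
  (forall i, R i i) -> (forall i j, R i j -> R j i) ->
  (forall i j k, R i j -> R j k -> R i k) ->
  (forall i j : 'I_m, val j = (val i).+1 -> R i j) ->
  forall i j, R i j.
Proof.
move=> Rr Rs Rt Ra i j.
have m0 : (0 < m)%N by case: i => [k hk]; lia.
set j0 := Ordinal m0.
suff H : forall k (hk : (k < m)%N), R (Ordinal hk) j0.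
  case: i => [i hi]; case: j => [j hj].
  exact: Rt (H i hi) (Rs _ _ (H j hj)).
elim=> [|k IH] hk.
  by have -> : Ordinal hk = j0 by apply/val_inj.
have hk' : (k < m)%N by lia.
apply: Rt (IH hk'); apply: Rs; exact: Ra.
Qed.

Lemma red3 {n c} (a b : letter n c) : UWab_eq [:: a; a] [::] ->
  UWab_eq [:: a; b; a] [:: b].
Proof.
move=> h.
apply: (Ab_trans (w2 := [:: a; a; b])).
  exact: (@cat_congr _ _ [:: a] ([:: b] ++ [:: a]) [:: a] ([:: a] ++ [:: b]) (Ab_refl _) (Ab_comm _ _)).
exact: (@cat_congr _ _ [:: a; a] [:: b] [::] [:: b] h (Ab_refl _)).
Qed.

Lemma rr {n c} (i : 'I_n.-1) : UWab_eq [:: pos (Rho c i); pos (Rho c i)] [::].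
Proof. exact: Ab_rel (R_rhosq _ _). Qed.

Lemma rho_sign {n c} (i : 'I_n.-1) b : UWab_eq [:: (Rho c i, b)] [:: pos (Rho c i)].
Proof.
case: b; last exact: Ab_refl.
apply: (Ab_trans (w2 := [:: pos (Rho c i); pos (Rho c i)] ++ [:: (Rho c i, true)])).
  exact: Ab_sym (@cat_congr _ _ _ _ [::] _ (rr i) (Ab_refl _)).
have := @cat_congr _ _ [:: pos (Rho c i)] [:: pos (Rho c i); (Rho c i, true)] _ [::] (Ab_refl _) (Ab_free _).
by rewrite cats0.
Qed.

Lemma rho_pos {n c} (i j : 'I_n.-1) : UWab_eq [:: pos (Rho c i)] [:: pos (Rho c j)].
Proof.
move: i j; apply: chain.
- by move=> i; exact: Ab_refl.
- by move=> i j; exact: Ab_sym.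
- by move=> i j k; exact: Ab_trans.
move=> i j hij.
have B := Ab_rel (R_braid c hij).
apply: Ab_trans (Ab_sym (red3 (pos (Rho c j)) (pos (Rho c i)) (rr j))) _.
apply: Ab_trans (Ab_sym B) _.
exact: (red3 _ _ (rr i)).
Qed.

Lemma rho_any {n c} (i j : 'I_n.-1) b b' :
  UWab_eq [:: (Rho c i, b)] [:: (Rho c j, b')].
Proof.
apply: Ab_trans (rho_sign i b) _.
apply: Ab_trans (rho_pos i j) (Ab_sym (rho_sign j b')).
Qed.

Lemma sig_pos {n c} (t : 'I_c) (i j : 'I_n.-1) :
  UWab_eq [:: pos (Sig i t)] [:: pos (Sig j t)].
Proof.
move: i j; apply: chain.
- by move=> i; exact: Ab_refl.
- by move=> i j; exact: Ab_sym.
- by move=> i j k; exact: Ab_trans.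
move=> i j hij.
have M := Ab_rel (R_mixed t hij).
apply: (cancel_r (d := [:: pos (Rho c i); pos (Rho c j)])).
exact: Ab_trans (Ab_comm [:: pos (Sig i t)] [:: pos (Rho c i); pos (Rho c j)]) M.
Qed.

Lemma sig_any {n c} (t : 'I_c) (i j : 'I_n.-1) b :
  UWab_eq [:: (Sig i t, b)] [:: (Sig j t, b)].
Proof.
case: b; last exact: sig_pos.
have := inv_congr _ _ (sig_pos t i j).
rewrite /inv_letter /=. exact.
Qed.

Lemma split_has {T} (p : pred T) (s : seq T) : has p s ->
  exists a y b, s = a ++ y :: b /\ p y.
Proof.
elim: s => [|x s IH] //= /orP [px|hs].
  by exists [::], x, s.
have [a [y [b [-> py]]]] := IH hs.
by exists (x :: a), y, b.
Qed.

Lemma move2 {n c} (x y : letter n c) a b :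
  UWab_eq (x :: a ++ y :: b) ([:: x; y] ++ (a ++ b)).
Proof.
have h : UWab_eq (a ++ y :: b) (y :: a ++ b).
  have := Ab_ctx [::] b (Ab_comm a [:: y]).
  by rewrite /= -!catA.
by have := Ab_ctx [:: x] [::] h; rewrite !cats0.
Qed.

Definition sgn (b : bool) : int := if b then -1 else 1.

Definition ee {n c} (t : 'I_c) (x : letter n c) : int :=
  match x.1 with Sig _ t' => if t' == t then sgn x.2 else 0 | Rho _ => 0 end.
Definition rz {n c} (x : letter n c) : 'Z_2 :=
  match x.1 with Rho _ => 1 | Sig _ _ => 0 end.

Definition EE {n c} (t : 'I_c) (w : word n c) : int := \sum_(x <- w) ee t x.
Definition RZ {n c} (w : word n c) : 'Z_2 := \sum_(x <- w) rz x.

Definition sig_of {n c} (t : 'I_c) (s : bool) (x : letter n c) : bool :=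
  match x.1 with Sig _ t' => (t' == t) && (x.2 == s) | Rho _ => false end.
Definition is_rho {n c} (x : letter n c) : bool :=
  match x.1 with Rho _ => true | Sig _ _ => false end.

Lemma RZ_norho {n c} (w : word n c) : ~~ has is_rho w -> RZ w = 0.
Proof.
elim: w => [|[g b] w IH] /=; first by rewrite /RZ big_nil.
rewrite negb_or => /andP [h1 h2].
rewrite /RZ big_cons -/(RZ w) IH // addr0.
by case: g h1.
Qed.

Lemma EE_bound {n c} (t : 'I_c) s (w : word n c) :
  ~~ has (sig_of t s) w -> sgn s * EE t w <= 0.
Proof.
elim: w => [|[g b] w IH] /=; first by rewrite /EE big_nil mulr0.
rewrite negb_or => /andP [h1 h2].
rewrite /EE big_cons -/(EE t w) mulrDr.
have := IH h2.
case: g h1 => [i|i t'] /=; first by rewrite /ee /= mulr0 add0r.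
rewrite /ee /sig_of /=.
case: (t' == t) => /=; last by rewrite mulr0 add0r.
by case: s IH h2; case: b => //= _ _; rewrite /sgn; lia.
Qed.

Lemma z2key (x y : 'Z_2) : 1 + (x + (1 + y)) = x + y.
Proof.
case: x => [[|[|m]] hx]; case: y => [[|[|m']] hy] //.
all: apply/val_inj; reflexivity.
Qed.

Lemma z2_1x (x : 'Z_2) : 1 + x = 0 -> x = 1.
Proof.
case: x => [[|[|m]] hx] // /(congr1 val) //.
move=> _; apply/val_inj; reflexivity.
Qed.

Lemma ker {n c} (w : word n c) :
  (forall t, EE t w = 0) -> RZ w = 0 -> UWab_eq w [::].
Proof.
move: {2}(size w) (leqnn (size w)) => k; elim: k w => [|k IH] w.
  by case: w => // _ _ _; exact: Ab_refl.
case: w => [|x w'] hs hE hR; first exact: Ab_refl.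
case: x hs hE hR => [g b] hs hE hR.
case: g hs hE hR => [i|i t] hs hE hR.
-
  have hR' : RZ w' = 1.
    move: hR; rewrite /RZ big_cons /rz /= -/(RZ w') => hR.
    exact: z2_1x.
  have hh : has is_rho w'.
    apply/negPn/negP => /RZ_norho; rewrite hR' => /eqP; by [].
  have [a [y [bb [ew py]]]] := split_has _ _ hh.
  subst w'; clear hh hR'.
  apply: Ab_trans (move2 _ _ a bb) _.
  case: y py hs hE hR => [[j|j t'] b'] // _ hs hE hR.
  apply: Ab_trans (cat_congr (Ab_trans (cat_congr (rho_any i i b false) (rho_any j i b' false)) (rr i)) (Ab_refl _)) _.
  apply: IH.
  + by move: hs; rewrite /= !size_cat /=; lia.
  + move=> t0; have := hE t0; rewrite /EE /= !big_cons !big_cat !big_cons.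
    by rewrite /ee /= !add0r.
  + move: hR; rewrite /RZ /= !big_cons !big_cat !big_cons /rz /=.
    by rewrite z2key.
-
  have hEt : EE t w' = - sgn b.
    move: (hE t); rewrite /EE big_cons /ee /= eqxx -/(EE t w') => h.
    by move: h; rewrite /sgn; case: (b) => /= h; lia.
  have hh : has (sig_of t (~~ b)) w'.
    apply/negPn/negP => /EE_bound; rewrite hEt.
    by case: (b) => /=; rewrite /sgn.
  have [a [y [bb [ew py]]]] := split_has _ _ hh.
  subst w'; clear hh hEt.
  apply: Ab_trans (move2 _ _ a bb) _.
  case: y py hs hE hR => [[j|j t'] b'] //; rewrite /sig_of /= => /andP [/eqP et /eqP eb] hs hE hR.
  subst t' b'.
  have e2 : UWab_eq [:: (Sig i t, b); (Sig j t, ~~ b)] [::].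
    apply: Ab_trans (cat_congr (Ab_refl [:: (Sig i t, b)]) (sig_any t j i (~~ b))) _.
    exact: (Ab_free (Sig i t, b)).
  apply: Ab_trans (cat_congr e2 (Ab_refl _)) _.
  apply: IH.
  + by move: hs; rewrite /= !size_cat /=; lia.
  + move=> t0; have := hE t0; rewrite /EE /= !big_cons !big_cat !big_cons.
    rewrite /ee /=; case: (t == t0) => /=; last by rewrite !add0r.
    by case: (b) => /=; rewrite /sgn; lia.
  + move: hR; rewrite /RZ /= !big_cons !big_cat !big_cons /rz /=.
    by rewrite !add0r.
Qed.

Lemma z2_xx (x : 'Z_2) : x + x = 0.
Proof. case: x => [[|[|m]] hx] //; apply/val_inj; reflexivity. Qed.

Lemma ee_inv {n c} t (x : letter n c) : ee t (inv_letter x) = - ee t x.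
Proof.
case: x => [[i|i t'] b]; rewrite /ee /=; first by rewrite oppr0.
by case: (t' == t); case: b; rewrite /sgn ?opprK ?oppr0.
Qed.

Lemma rz_inv {n c} (x : letter n c) : rz (inv_letter x) = rz x.
Proof. by case: x => [[i|i t'] b]. Qed.

Lemma EE_cat {n c} t (a b : word n c) : EE t (a ++ b) = EE t a + EE t b.
Proof. exact: big_cat. Qed.
Lemma RZ_cat {n c} (a b : word n c) : RZ (a ++ b) = RZ a + RZ b.
Proof. exact: big_cat. Qed.

Lemma EE_winv {n c} t (w : word n c) : EE t (winv w) = - EE t w.
Proof.
rewrite /EE /winv big_rev big_map -sumrN.
by apply: eq_bigr => x _; rewrite ee_inv.
Qed.
Lemma RZ_winv {n c} (w : word n c) : RZ (winv w) = RZ w.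
Proof.
rewrite /RZ /winv big_rev big_map.
by apply: eq_bigr => x _; rewrite rz_inv.
Qed.

Lemma inv_EE_RZ {n c} (w1 w2 : word n c) : UWab_eq w1 w2 ->
  (forall t, EE t w1 = EE t w2) /\ RZ w1 = RZ w2.
Proof.
elim=> {w1 w2}.
- by [].
- by move=> w1 w2 _ [h1 h2]; split=> // t; rewrite h1.
- by move=> w1 w2 w3 _ [h1 h2] _ [h3 h4]; split=> [t|]; [rewrite h1 h3 | rewrite h2 h4].
- move=> u v w1 w2 _ [h1 h2]; split=> [t|]; first by rewrite !EE_cat h1.
  by rewrite !RZ_cat h2.
- move=> x; split=> [t|].
    by rewrite /EE !big_cons big_nil ee_inv addr0 subrr.
  by rewrite /RZ !big_cons big_nil rz_inv addr0 z2_xx.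
- move=> l r []; clear l r.
  + by move=> i j _; split=> [t|]; rewrite /EE /RZ !big_cons big_nil.
  + by move=> i j _; split=> [t|]; rewrite /EE /RZ !big_cons big_nil /rz /= ?addr0 ?addrC.
  + by move=> i; split=> [t|]; rewrite /EE /RZ !big_cons !big_nil /= ?addr0 ?z2_xx.
  + move=> i j t l _; split=> [t0|]; rewrite /EE /RZ !big_cons !big_nil /= ?addr0 //.
    by rewrite addrC.
  + move=> i j t _; split=> [t0|]; rewrite /EE /RZ !big_cons !big_nil /ee /rz /= ?addr0 ?add0r //.
  + move=> i j t _; split=> [t0|]; rewrite /EE /RZ !big_cons !big_nil /ee /rz /= ?addr0 ?add0r //.
  + move=> i j t _; split=> [t0|]; rewrite /EE /RZ !big_cons !big_nil /ee /rz /= ?addr0 ?add0r //.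
- move=> u v; split=> [t|]; first by rewrite !EE_cat addrC.
  by rewrite !RZ_cat addrC.
Qed.

Definition pw {n c} (i0 : 'I_n.-1) (t : 'I_c) (k : int) : word n c :=
  match k with
  | Posz m => nseq m (Sig i0 t, false)
  | Negz m => nseq m.+1 (Sig i0 t, true)
  end.

Lemma EE_nseq {n c} t (x : letter n c) m : EE t (nseq m x) = ee t x *+ m.
Proof.
elim: m => [|m IH]; first by rewrite /EE big_nil.
by rewrite /EE /= big_cons -/(EE t _) IH mulrS.
Qed.

Lemma RZ_nseq {n c} (x : letter n c) m : RZ (nseq m x) = rz x *+ m.
Proof.
elim: m => [|m IH]; first by rewrite /RZ big_nil.
by rewrite /RZ /= big_cons -/(RZ _) IH mulrS.
Qed.

Lemma EE_pw {n c} i0 (t t' : 'I_c) k :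
  EE t' (pw (n:=n) i0 t k) = if t == t' then k else 0.
Proof.
case: k => m; rewrite /pw EE_nseq /ee /=; case: (t == t') => //; rewrite ?mul0rn //.
  by rewrite /sgn natz.
by rewrite /sgn NegzE mulNrn natz.
Qed.

Lemma RZ_pw {n c} i0 (t : 'I_c) k : RZ (pw (n:=n) i0 t k) = 0.
Proof. by case: k => m; rewrite /pw RZ_nseq /rz /= mul0rn. Qed.

Lemma EE_flat {n c} t (s : seq 'I_c) (g : 'I_c -> word n c) :
  EE t (flatten (map g s)) = \sum_(u <- s) EE t (g u).
Proof.
elim: s => [|u s IH]; first by rewrite /EE !big_nil.
by rewrite /= EE_cat IH big_cons.
Qed.

Lemma RZ_flat {n c} (s : seq 'I_c) (g : 'I_c -> word n c) :
  (forall u, RZ (g u) = 0) -> RZ (flatten (map g s)) = 0.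
Proof.
move=> h; elim: s => [|u s IH]; first by rewrite /RZ !big_nil.
by rewrite /= RZ_cat IH h addr0.
Qed.

Definition phi {n c} (w : word n c) : 'rV[int]_c * 'Z_2 :=
  (\row_t EE t w, RZ w).

Lemma pairD (c : nat) (a b : 'rV[int]_c * 'Z_2) : a + b = (a.1 + b.1, a.2 + b.2).
Proof. by []. Qed.

Theorem proposition5p7 (n c : nat) (hn : (2 <= n)%N) (hc : (1 <= c)%N) :
  exists phi : word n c -> ('rV[int]_c * 'Z_2)%type,
    (forall w1 w2, phi (w1 ++ w2) = phi w1 + phi w2) /\
    (forall w1 w2, UWab_eq w1 w2 <-> phi w1 = phi w2) /\
    (forall z, exists w, phi w = z).
Proof.
exists phi; split; [|split].
- move=> w1 w2; rewrite pairD /phi /=; congr (_, _); last exact: RZ_cat.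
  by apply/rowP => t; rewrite !mxE EE_cat.
- move=> w1 w2; split.
    move=> /inv_EE_RZ [h1 h2]; rewrite /phi h2; congr (_, _).
    by apply/rowP => t; rewrite !mxE h1.
  rewrite /phi => -[h1 h2]; apply: ker_winv; apply: ker.
    move=> t; have := congr1 (fun r : 'rV[int]_c => r 0 t) h1; rewrite /= !mxE => e.
    by rewrite EE_cat EE_winv e subrr.
  by rewrite RZ_cat RZ_winv h2 z2_xx.
- move=> [v z].
  have i0 : 'I_n.-1 by exists 0%N; lia.
  exists (flatten (map (fun t => pw i0 t (v 0 t)) (index_enum 'I_c)) ++
          (if z == 0 then [::] else [:: pos (Rho c i0)])).
  rewrite /phi; congr (_, _).
    apply/rowP => t'; rewrite mxE EE_cat EE_flat.
    have -> : EE t' (if z == 0 then [::] else [:: pos (Rho c i0)]) = 0.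
      by case: (z == 0); rewrite /EE ?big_cons big_nil /ee /= ?addr0.
    rewrite addr0.
    under eq_bigr do rewrite EE_pw.
    by rewrite -big_mkcond /= big_pred1_eq.
  rewrite RZ_cat RZ_flat; last by move=> u; exact: RZ_pw.
  rewrite add0r; case: z => [[|[|m]] hz] //.
    by rewrite /RZ big_nil; apply/val_inj.
  by rewrite /RZ big_cons big_nil addr0; apply/val_inj.
Qed.
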